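(* Let $\mathcal V$ be a variety of co-Heyting algebras. The following are equivalent: (1) $\mathcal V$ has the finite model property; (2) every algebra free in $\mathcal V$ is residually finite; (3) every algebra free in $\mathcal V$ is Hausdorff; (4) every algebra finitely presented in $\mathcal V$ is precompact and Hausdorff.
   Context: A co-Heyting algebra is a bounded distributive lattice $(L,0,1,\vee,\wedge)$ such that $a-b=\min\{c\in L: a\le b\vee c\}$ exists for all $a,b$; varieties, free and finitely presented algebras are in the sense of universal algebra for the language $\{0,1,\vee,\wedge,-\}$. $\mathcal V$ has the finite model property if for every term $t(x)$, whenever some algebra of $\mathcal V$ satisfies $\exists x\, t(x)\ne0$, some finite algebra of $\mathcal V$ does. $L$ is residually finite if for every nonzero $a\in L$ there is an ideal $I$ with $a\notin I$ and $L/I$ finite, where $L/I$ is the quotient by $a\equiv_I b\iff (a-b)\vee(b-a)\in I$. $\operatorname{Spec}L$ is the set of prime filters ordered by inclusion; height = foundation rank there; $\operatorname{codim}_La=\min\{\operatorname{height}\mathfrak p: a\in\mathfrak p\}$ ($+\infty$ if none); $dL=\{a:\operatorname{codim}_La\ge d\}$ (an ideal). $L$ is Hausdorff if every nonzero element has finite codimension; $L$ is precompact if $L/dL$ is finite for every positive integer $d$. *)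

(* Defs.v *)
From Stdlib Require Import List Arith.
Import ListNotations.

Inductive term : Type :=
| tVar  : nat -> term
| tZero : term
| tOne  : term
| tJoin : term -> term -> term
| tMeet : term -> term -> term
| tDiff : term -> term -> term.

Record coHeyting : Type := CoHeyting {
  carrier :> Type;
  zero : carrier;
  one  : carrier;
  join : carrier -> carrier -> carrier;
  meet : carrier -> carrier -> carrier;
  diff : carrier -> carrier -> carrier;
  joinA : forall a b c, join a (join b c) = join (join a b) c;
  meetA : forall a b c, meet a (meet b c) = meet (meet a b) c;
  joinC : forall a b, join a b = join b a;
  meetC : forall a b, meet a b = meet b a;
  join_meetK : forall a b, join a (meet a b) = a;
  meet_joinK : forall a b, meet a (join a b) = a;
  meet_joinDl : forall a b c, meet a (join b c) = join (meet a b) (meet a c);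
  join0 : forall a, join zero a = a;
  meet1 : forall a, meet one a = a;
  (* a - b = min { c : a <= b \/ c }, where x <= y means x \/ y = y *)
  diff_ge : forall a b, join a (join b (diff a b)) = join b (diff a b);
  diff_min : forall a b c, join a (join b c) = join b c ->
                           join (diff a b) c = c
}.

Section Algebra.
Variable A : coHeyting.

Definition le (a b : A) : Prop := join A a b = b.

Fixpoint eval (env : nat -> A) (t : term) : A :=
  match t with
  | tVar n => env n
  | tZero => zero A
  | tOne => one A
  | tJoin s u => join A (eval env s) (eval env u)
  | tMeet s u => meet A (eval env s) (eval env u)
  | tDiff s u => diff A (eval env s) (eval env u)
  end.

Definition finite_alg : Prop := exists l : list A, forall a : A, In a l.

Definition ideal (I : A -> Prop) : Prop :=
  I (zero A) /\
  (forall a b, I b -> le a b -> I a) /\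
  (forall a b, I a -> I b -> I (join A a b)).

Definition equiv_mod (I : A -> Prop) (a b : A) : Prop :=
  I (join A (diff A a b) (diff A b a)).

Definition quotient_finite (I : A -> Prop) : Prop :=
  exists l : list A, forall a : A, exists b, In b l /\ equiv_mod I a b.

Definition residually_finite : Prop :=
  forall a : A, a <> zero A ->
    exists I : A -> Prop, ideal I /\ ~ I a /\ quotient_finite I.

Definition prime_filter (p : A -> Prop) : Prop :=
  p (one A) /\
  (forall a b, p a -> le a b -> p b) /\
  (forall a b, p a -> p b -> p (meet A a b)) /\
  ~ p (zero A) /\
  (forall a b, p (join A a b) -> p a \/ p b).

Definition strict_sub (q p : A -> Prop) : Prop :=
  (forall x, q x -> p x) /\ exists x, p x /\ ~ q x.

(** [ht_le n p] : the foundation rank (height) of [p] in Spec A is <= n *)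
Fixpoint ht_le (n : nat) (p : A -> Prop) : Prop :=
  match n with
  | 0 => forall q, prime_filter q -> strict_sub q p -> False
  | S m => forall q, prime_filter q -> strict_sub q p -> ht_le m q
  end.

Definition codim_finite (a : A) : Prop :=
  exists (p : A -> Prop) (n : nat), prime_filter p /\ p a /\ ht_le n p.

Definition codim_ge (d : nat) (a : A) : Prop :=
  forall p : A -> Prop, prime_filter p -> p a ->
    forall m, m < d -> ~ ht_le m p.

Definition dL (d : nat) : A -> Prop := codim_ge d.

Definition hausdorff : Prop :=
  forall a : A, a <> zero A -> codim_finite a.

Definition precompact : Prop :=
  forall d : nat, 0 < d -> quotient_finite (dL d).

End Algebra.

Arguments eval {A}.

Definition hom (A B : coHeyting) (h : A -> B) : Prop :=
  h (zero A) = zero B /\ h (one A) = one B /\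
  (forall a b, h (join A a b) = join B (h a) (h b)) /\
  (forall a b, h (meet A a b) = meet B (h a) (h b)) /\
  (forall a b, h (diff A a b) = diff B (h a) (h b)).

Definition equations := term -> term -> Prop.

Definition in_V (E : equations) (A : coHeyting) : Prop :=
  forall s t, E s t -> forall env : nat -> A, eval env s = eval env t.

Definition fmp (E : equations) : Prop :=
  forall t : term,
    (exists A : coHeyting, in_V E A /\ exists env : nat -> A, eval env t <> zero A) ->
    (exists A : coHeyting, in_V E A /\ finite_alg A /\
        exists env : nat -> A, eval env t <> zero A).

Definition is_free (E : equations) (F : coHeyting) : Prop :=
  in_V E F /\
  exists (X : Type) (i : X -> F),
    forall B : coHeyting, in_V E B -> forall f : X -> B,
      exists h : F -> B, hom F B h /\ (forall x, h (i x) = f x) /\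
        forall h' : F -> B, hom F B h' -> (forall x, h' (i x) = f x) ->
          forall a, h' a = h a.

Fixpoint vars_lt (n : nat) (t : term) : Prop :=
  match t with
  | tVar k => k < n
  | tZero | tOne => True
  | tJoin s u | tMeet s u | tDiff s u => vars_lt n s /\ vars_lt n u
  end.

Definition is_fp (E : equations) (A : coHeyting) : Prop :=
  in_V E A /\
  exists (n : nat) (R : list (term * term)) (g : nat -> A),
    (forall st, In st R -> vars_lt n (fst st) /\ vars_lt n (snd st)) /\
    (forall st, In st R -> eval g (fst st) = eval g (snd st)) /\
    forall B : coHeyting, in_V E B -> forall b : nat -> B,
      (forall st, In st R -> eval b (fst st) = eval b (snd st)) ->
      exists h : A -> B, hom A B h /\ (forall k, k < n -> h (g k) = b k) /\
        forall h' : A -> B, hom A B h' -> (forall k, k < n -> h' (g k) = b k) ->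
          forall a, h' a = h a.

(* Main.v *)
Require Import Defs.
From Stdlib Require Import List Arith Lia.
From Stdlib Require Import Classical ClassicalEpsilon FunctionalExtensionality PropExtensionality ProofIrrelevance.
Import ListNotations.

Section Lat.
Variable L : coHeyting.
Notation "x ⊔ y" := (join L x y) (at level 50).
Notation "x ⊓ y" := (meet L x y) (at level 40).
Notation "x ∖ y" := (diff L x y) (at level 45).
Notation "x ≤ y" := (le L x y) (at level 70).
Notation "0" := (zero L).
Notation "1" := (one L).

Lemma joinI a : a ⊔ a = a.
Proof. rewrite <- (meet_joinK L a a) at 2. apply join_meetK. Qed.
Lemma meetI a : a ⊓ a = a.
Proof. rewrite <- (join_meetK L a a) at 2. apply meet_joinK. Qed.
Lemma le_refl a : a ≤ a. Proof. apply joinI. Qed.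
Lemma le_trans a b c : a ≤ b -> b ≤ c -> a ≤ c.
Proof. unfold le; intros H1 H2. rewrite <- H2, joinA, H1. reflexivity. Qed.
Lemma le_antisym a b : a ≤ b -> b ≤ a -> a = b.
Proof. unfold le; intros H1 H2. rewrite <- H1, joinC. symmetry; exact H2. Qed.
Lemma le_joinl a b : a ≤ a ⊔ b.
Proof. unfold le. rewrite joinA, joinI. reflexivity. Qed.
Lemma le_joinr a b : b ≤ a ⊔ b.
Proof. rewrite joinC. apply le_joinl. Qed.
Lemma join_lub a b c : a ≤ c -> b ≤ c -> a ⊔ b ≤ c.
Proof. unfold le; intros H1 H2. rewrite <- joinA, H2, H1. reflexivity. Qed.
Lemma le_jl a x y : a ≤ x -> a ≤ x ⊔ y.
Proof. intro; eapply le_trans; [eassumption|apply le_joinl]. Qed.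
Lemma le_jr a x y : a ≤ y -> a ≤ x ⊔ y.
Proof. intro; eapply le_trans; [eassumption|apply le_joinr]. Qed.
Ltac lj := repeat (apply join_lub); first [apply le_refl | apply le_jl; lj | apply le_jr; lj].
Lemma le_meet a b : a ≤ b <-> a ⊓ b = a.
Proof. unfold le; split; intro H.
 - rewrite <- H. apply meet_joinK.
 - rewrite <- H, joinC, meetC. apply join_meetK. Qed.
Lemma le_meetl a b : a ⊓ b ≤ a.
Proof. apply le_meet. rewrite meetC, meetA, meetI. reflexivity. Qed.
Lemma le_meetr a b : a ⊓ b ≤ b.
Proof. rewrite meetC. apply le_meetl. Qed.
Lemma meet_glb a b c : c ≤ a -> c ≤ b -> c ≤ a ⊓ b.
Proof. rewrite !le_meet; intros H1 H2. rewrite meetA, H1, H2. reflexivity. Qed.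
Lemma join0r a : a ⊔ 0 = a. Proof. rewrite joinC; apply join0. Qed.
Lemma meet1r a : a ⊓ 1 = a. Proof. rewrite meetC; apply meet1. Qed.
Lemma le0 a : 0 ≤ a. Proof. apply join0. Qed.
Lemma le1 a : a ≤ 1. Proof. apply le_meet, meet1r. Qed.
Lemma le0_eq a : a ≤ 0 -> a = 0.
Proof. unfold le. rewrite join0r. auto. Qed.
Lemma join_mono a b c d : a ≤ b -> c ≤ d -> a ⊔ c ≤ b ⊔ d.
Proof. intros. apply join_lub.
 - eapply le_trans; [eassumption|apply le_joinl].
 - eapply le_trans; [eassumption|apply le_joinr]. Qed.
Lemma meet_mono a b c d : a ≤ b -> c ≤ d -> a ⊓ c ≤ b ⊓ d.
Proof. intros. apply meet_glb.
 - eapply le_trans; [apply le_meetl|]; assumption.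
 - eapply le_trans; [apply le_meetr|]; assumption. Qed.
Lemma meet_joinDr a b c : (b ⊔ c) ⊓ a = (b ⊓ a) ⊔ (c ⊓ a).
Proof. rewrite meetC, meet_joinDl, (meetC L a b), (meetC L a c). reflexivity. Qed.
Lemma meet_join_bound a b x y : (a ⊔ x) ⊓ (b ⊔ y) ≤ (a ⊓ b) ⊔ (x ⊔ y).
Proof.
  rewrite meet_joinDl, !meet_joinDr.
  repeat apply join_lub.
  - apply le_joinl.
  - eapply le_trans; [apply le_meetl|]. lj.
  - eapply le_trans; [apply le_meetr|]. lj.
  - eapply le_trans; [apply le_meetr|]. lj.
Qed.
Lemma diff_le a b : a ≤ b ⊔ (a ∖ b). Proof. apply diff_ge. Qed.
Lemma diff_galois a b c : a ∖ b ≤ c <-> a ≤ b ⊔ c.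
Proof. split; intro H.
 - eapply le_trans; [apply diff_le|]. apply join_mono; [apply le_refl|exact H].
 - apply diff_min. exact H. Qed.
Lemma diff_monol a a' b : a ≤ a' -> a ∖ b ≤ a' ∖ b.
Proof. intro. apply diff_galois. eapply le_trans; eauto. apply diff_le. Qed.
Lemma diff_monor a b b' : b' ≤ b -> a ∖ b ≤ a ∖ b'.
Proof. intro. apply diff_galois. eapply le_trans; [apply (diff_le a b')|].
  apply join_mono; auto using le_refl. Qed.
Lemma diff_zero_iff a b : a ∖ b = 0 <-> a ≤ b.
Proof. split; intro H.
 - eapply le_trans; [apply diff_le|]. rewrite H, join0r. apply le_refl.
 - apply le0_eq, diff_galois. rewrite join0r. exact H. Qed.
Lemma diff_self a : a ∖ a = 0. Proof. apply diff_zero_iff, le_refl. Qed.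
Lemma diff_0l a : 0 ∖ a = 0. Proof. apply diff_zero_iff, le0. Qed.
Lemma diff_0r a : a ∖ 0 = a.
Proof. apply le_antisym.
 - apply diff_galois. rewrite join0. apply le_refl.
 - eapply le_trans; [apply (diff_le a 0)|]. rewrite join0. apply le_refl. Qed.
Lemma diff_lel a b : a ∖ b ≤ a.
Proof. apply diff_galois, le_joinr. Qed.
Lemma diff_tri a b c : a ∖ c ≤ (a ∖ b) ⊔ (b ∖ c).
Proof. apply diff_galois. eapply le_trans; [apply (diff_le a b)|].
  rewrite (joinC L (a ∖ b)), joinA. apply join_mono; [|apply le_refl].
  eapply le_trans; [apply (diff_le b c)|]. apply le_refl. Qed.

Definition dd a b := (a ∖ b) ⊔ (b ∖ a).

Lemma dd_self a : dd a a = 0. Proof. unfold dd. rewrite diff_self. apply join0. Qed.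
Lemma dd_sym a b : dd a b = dd b a. Proof. apply joinC. Qed.
Lemma dd_tri a b c : dd a c ≤ dd a b ⊔ dd b c.
Proof. unfold dd. apply join_lub.
 - eapply le_trans; [apply (diff_tri a b c)|]. apply join_mono; apply le_joinl.
 - eapply le_trans; [apply (diff_tri c b a)|]. rewrite joinC. apply join_mono; apply le_joinr.
Qed.
Lemma dd_0 a : dd a 0 = a. Proof. unfold dd. rewrite diff_0r, diff_0l. apply join0r. Qed.

Lemma le_join4 a b c d : a ⊔ b ⊔ (c ⊔ d) = (a ⊔ c) ⊔ (b ⊔ d).
Proof. rewrite <- !joinA. f_equal. rewrite !joinA. f_equal. apply joinC. Qed.

Lemma diff_join_bound a b a' b' : (a ⊔ b) ∖ (a' ⊔ b') ≤ (a ∖ a') ⊔ (b ∖ b').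
Proof. apply diff_galois. rewrite le_join4. apply join_mono; apply diff_le. Qed.
Lemma diff_meet_bound a b a' b' : (a ⊓ b) ∖ (a' ⊓ b') ≤ (a ∖ a') ⊔ (b ∖ b').
Proof. apply diff_galois. eapply le_trans; [|apply meet_join_bound].
  apply meet_mono; apply diff_le. Qed.
Lemma diff_diff_bound a b a' b' : (a ∖ b) ∖ (a' ∖ b') ≤ (a ∖ a') ⊔ (b' ∖ b).
Proof. apply diff_galois, diff_galois.
  eapply le_trans; [apply (diff_le a a')|].
  eapply le_trans; [apply join_mono; [apply (diff_le a' b')|apply le_refl]|].
  eapply le_trans; [apply join_mono; [apply join_mono; [apply (diff_le b' b)|apply le_refl]|apply le_refl]|].
  lj.
Qed.
Lemma dd_join a b a' b' : dd (a ⊔ b) (a' ⊔ b') ≤ dd a a' ⊔ dd b b'.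
Proof. unfold dd. apply join_lub.
 - eapply le_trans; [apply diff_join_bound|]. lj.
 - eapply le_trans; [apply diff_join_bound|]. lj. Qed.
Lemma dd_meet a b a' b' : dd (a ⊓ b) (a' ⊓ b') ≤ dd a a' ⊔ dd b b'.
Proof. unfold dd. apply join_lub.
 - eapply le_trans; [apply diff_meet_bound|]. lj.
 - eapply le_trans; [apply diff_meet_bound|]. lj. Qed.
Lemma dd_diff a b a' b' : dd (a ∖ b) (a' ∖ b') ≤ dd a a' ⊔ dd b b'.
Proof. unfold dd. apply join_lub.
 - eapply le_trans; [apply diff_diff_bound|]. lj.
 - eapply le_trans; [apply diff_diff_bound|]. lj. Qed.
End Lat.

Lemma dd_diffmin (L : coHeyting) a b c :
  le L (dd L (join L (diff L a b) c) c) (dd L (join L a (join L b c)) (join L b c)).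
Proof.
  unfold dd. apply le_jl.
  assert (H: diff L c (join L (diff L a b) c) = zero L) by (apply diff_zero_iff, le_joinr).
  rewrite H, join0r. apply diff_galois. apply join_lub; [|apply le_joinl].
  apply diff_galois. rewrite joinA. eapply le_trans; [apply (le_joinl L a (join L b c))|].
  eapply le_trans; [apply diff_le|]. rewrite joinA. apply le_refl.
Qed.

Lemma sig_eq {T} (P : T -> Prop) (x y : {t | P t}) : proj1_sig x = proj1_sig y -> x = y.
Proof. destruct x, y; simpl; intro; subst; f_equal; apply proof_irrelevance. Qed.

Lemma hom_eval A B h env t : hom A B h -> h (eval env t) = eval (fun k => h (env k)) t.
Proof. intros (H0&H1&Hj&Hm&Hd). induction t; simpl; auto; congruence. Qed.

Lemma hom_le A B h a b : hom A B h -> le A a b -> le B (h a) (h b).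
Proof. intros (H0&H1&Hj&Hm&Hd) H. unfold le in *. rewrite <- Hj, H. reflexivity. Qed.

Lemma eval_ext (A : coHeyting) n t (e1 e2 : nat -> A) : vars_lt n t -> (forall k, k < n -> e1 k = e2 k) ->
  eval e1 t = eval e2 t.
Proof. intros Hv He; induction t; simpl in *; try tauto; try (f_equal; tauto). auto. Qed.

Section Quot.
Variable L : coHeyting.
Variable I : L -> Prop.
Hypothesis HI : ideal L I.

Lemma I_down a b : I b -> le L a b -> I a. Proof. intros; eapply (proj1 (proj2 HI)); eauto. Qed.
Lemma I_join a b : I a -> I b -> I (join L a b). Proof. apply (proj2 (proj2 HI)). Qed.
Lemma I_zero : I (zero L). Proof. apply HI. Qed.

Lemma eqm_refl a : equiv_mod L I a a.
Proof. unfold equiv_mod. fold (dd L a a). rewrite dd_self. apply I_zero. Qed.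
Lemma eqm_sym a b : equiv_mod L I a b -> equiv_mod L I b a.
Proof. unfold equiv_mod. rewrite joinC. auto. Qed.
Lemma eqm_trans a b c : equiv_mod L I a b -> equiv_mod L I b c -> equiv_mod L I a c.
Proof. unfold equiv_mod; fold (dd L a b) (dd L b c) (dd L a c). intros.
  eapply I_down; [|apply dd_tri with (b:=b)]. apply I_join; auto. Qed.
Lemma eqm_op (op : L -> L -> L) :
  (forall a b a' b', le L (dd L (op a b) (op a' b')) (join L (dd L a a') (dd L b b'))) ->
  forall a b a' b', equiv_mod L I a a' -> equiv_mod L I b b' -> equiv_mod L I (op a b) (op a' b').
Proof. unfold equiv_mod; fold (dd L); intros Hop a b a' b' H1 H2.
  eapply I_down; [|apply Hop]. apply I_join; auto. Qed.

Definition qcar := {P : L -> Prop | exists a, P = equiv_mod L I a}.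
Definition cls (a : L) : qcar := exist _ (equiv_mod L I a) (ex_intro _ a eq_refl).
Lemma cls_eq a b : cls a = cls b <-> equiv_mod L I a b.
Proof. split; intro H.
 - apply (f_equal (@proj1_sig _ _)) in H. simpl in H.
   apply eqm_sym. rewrite <- H. apply eqm_refl.
 - apply sig_eq. simpl. extensionality c. apply propositional_extensionality.
   split; intro; [eapply eqm_trans; [apply eqm_sym|]; eauto|eapply eqm_trans; eauto]. Qed.
Lemma cls_surj (x : qcar) : exists a, x = cls a.
Proof. destruct x as [P [a Ha]]. exists a. apply sig_eq. simpl. exact Ha. Qed.
Definition rep (x : qcar) : L := proj1_sig (constructive_indefinite_description _ (cls_surj x)).
Lemma cls_rep x : cls (rep x) = x.
Proof. unfold rep. destruct constructive_indefinite_description. simpl. auto. Qed.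
Lemma rep_cls a : equiv_mod L I (rep (cls a)) a.
Proof. apply cls_eq. apply cls_rep. Qed.

Definition qj x y := cls (join L (rep x) (rep y)).
Definition qm x y := cls (meet L (rep x) (rep y)).
Definition qd x y := cls (diff L (rep x) (rep y)).
Lemma qj_cls a b : qj (cls a) (cls b) = cls (join L a b).
Proof. apply cls_eq. apply eqm_op; [apply dd_join|apply rep_cls|apply rep_cls]. Qed.
Lemma qm_cls a b : qm (cls a) (cls b) = cls (meet L a b).
Proof. apply cls_eq. apply eqm_op; [apply dd_meet|apply rep_cls|apply rep_cls]. Qed.
Lemma qd_cls a b : qd (cls a) (cls b) = cls (diff L a b).
Proof. apply cls_eq. apply eqm_op; [apply dd_diff|apply rep_cls|apply rep_cls]. Qed.

Ltac qdes := repeat match goal with x : qcar |- _ => destruct (cls_surj x) as [? ->]; clear x end;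
  rewrite ?qj_cls, ?qm_cls, ?qd_cls, ?qj_cls, ?qm_cls, ?qd_cls.

Definition Quot : coHeyting.
Proof.
  refine (CoHeyting qcar (cls (zero L)) (cls (one L)) qj qm qd _ _ _ _ _ _ _ _ _ _ _).
  all: intros; qdes; rewrite ?qj_cls, ?qm_cls, ?qd_cls, ?qj_cls, ?qm_cls, ?qd_cls.
  - f_equal; apply joinA. - f_equal; apply meetA. - f_equal; apply joinC. - f_equal; apply meetC.
  - f_equal; apply join_meetK.
  - f_equal; apply meet_joinK. - f_equal; apply meet_joinDl. - f_equal; apply join0.
  - f_equal; apply meet1. - f_equal; apply diff_ge.
  - match goal with H : _ = _ |- _ => rewrite ?qj_cls, ?qm_cls, ?qd_cls, ?qj_cls in H;
      apply cls_eq in H end. apply cls_eq. unfold equiv_mod in *. fold (dd L) in *.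
    eapply I_down; [eassumption|apply dd_diffmin].
Defined.

Lemma cls_hom : hom L Quot cls.
Proof. split; [|split; [|split; [|split]]]; simpl; auto;
  intros; symmetry; [apply qj_cls|apply qm_cls|apply qd_cls]. Qed.

Lemma cls_zero a : cls a = cls (zero L) <-> I a.
Proof. rewrite cls_eq. unfold equiv_mod. fold (dd L a (zero L)). rewrite dd_0. tauto. Qed.

Lemma Quot_inV E : in_V E L -> in_V E Quot.
Proof. intros HV s t Hst env.
  assert (Hev: forall u, eval env u = cls (eval (fun k => rep (env k)) u)).
  { intro u. rewrite (hom_eval _ _ _ _ _ cls_hom). simpl. f_equal.
    extensionality k. symmetry; apply cls_rep. }
  rewrite !Hev. f_equal. apply HV. exact Hst. Qed.

Lemma Quot_finite : quotient_finite L I -> finite_alg Quot.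
Proof. intros [l Hl]. exists (map cls l). intro x. destruct (cls_surj x) as [a ->].
  destruct (Hl a) as [b [Hb Hab]]. apply in_map_iff. exists b. split; auto.
  apply cls_eq. apply eqm_sym; auto. Qed.
End Quot.

Section Sub.
Variable L : coHeyting.
Variable S : L -> Prop.
Hypothesis S0 : S (zero L).
Hypothesis S1 : S (one L).
Hypothesis Sj : forall a b, S a -> S b -> S (join L a b).
Hypothesis Sm : forall a b, S a -> S b -> S (meet L a b).
Hypothesis Sd : forall a b, S a -> S b -> S (diff L a b).
Definition scar := {x | S x}.
Definition sj (x y : scar) : scar := exist _ _ (Sj _ _ (proj2_sig x) (proj2_sig y)).
Definition sm (x y : scar) : scar := exist _ _ (Sm _ _ (proj2_sig x) (proj2_sig y)).
Definition sd (x y : scar) : scar := exist _ _ (Sd _ _ (proj2_sig x) (proj2_sig y)).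
Definition Sub : coHeyting.
Proof.
  refine (CoHeyting scar (exist _ _ S0) (exist _ _ S1) sj sm sd _ _ _ _ _ _ _ _ _ _ _);
  intros; try (apply sig_eq; simpl).
  - apply joinA. - apply meetA. - apply joinC. - apply meetC. - apply join_meetK.
  - apply meet_joinK. - apply meet_joinDl. - apply join0. - apply meet1. - apply diff_ge.
  - apply diff_min. apply (f_equal (@proj1_sig _ _)) in H. exact H.
Defined.
Lemma incl_hom : hom Sub L (@proj1_sig _ _).
Proof. split; [|split; [|split; [|split]]]; reflexivity. Qed.
Lemma Sub_inV E : in_V E L -> in_V E Sub.
Proof. intros HV s t Hst env. apply sig_eq.
  rewrite !(hom_eval _ _ _ _ _ incl_hom). apply HV, Hst. Qed.
End Sub.

Fixpoint subst (sg : nat -> term) (t : term) : term :=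
  match t with
  | tVar n => sg n
  | tZero => tZero | tOne => tOne
  | tJoin a b => tJoin (subst sg a) (subst sg b)
  | tMeet a b => tMeet (subst sg a) (subst sg b)
  | tDiff a b => tDiff (subst sg a) (subst sg b)
  end.
Lemma eval_subst (A : coHeyting) env sg t :
  eval env (subst sg t) = eval (fun k => eval (A:=A) env (sg k)) t.
Proof. induction t; simpl; congruence. Qed.

Fixpoint maxv (t : term) : nat :=
  match t with
  | tVar n => S n
  | tZero | tOne => 0
  | tJoin a b | tMeet a b | tDiff a b => Nat.max (maxv a) (maxv b)
  end.
Lemma vars_lt_mono n m t : vars_lt n t -> n <= m -> vars_lt m t.
Proof. induction t; simpl; intuition lia. Qed.
Lemma vars_maxv t : vars_lt (maxv t) t.
Proof. induction t; simpl; auto;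
  split; eapply vars_lt_mono; eauto; lia. Qed.

Section Free.
Variable E : equations.
Variable n : nat.
Definition trunc (A : coHeyting) (env : nat -> A) : nat -> A :=
  fun k => if lt_dec k n then env k else zero A.
Definition equivN (s t : term) : Prop :=
  forall A : coHeyting, in_V E A -> forall env : nat -> A,
    eval (trunc A env) s = eval (trunc A env) t.
Definition fcar := {P : term -> Prop | exists t, P = equivN t}.
Definition fcls (t : term) : fcar := exist _ (equivN t) (ex_intro _ t eq_refl).
Lemma fcls_eq s t : fcls s = fcls t <-> equivN s t.
Proof. split; intro H.
 - apply (f_equal (@proj1_sig _ _)) in H. simpl in H.
   assert (equivN t t) by (intros ? ? ?; reflexivity). rewrite <- H in H0. exact H0.
 - apply sig_eq. simpl. extensionality u. apply propositional_extensionality.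
   split; intros H' A HA env; [rewrite <- (H A HA env)|rewrite (H A HA env)]; apply H'; auto. Qed.
Lemma fcls_surj (x : fcar) : exists t, x = fcls t.
Proof. destruct x as [P [a Ha]]. exists a. apply sig_eq. simpl. exact Ha. Qed.
Definition frep (x : fcar) : term := proj1_sig (constructive_indefinite_description _ (fcls_surj x)).
Lemma fcls_rep x : fcls (frep x) = x.
Proof. unfold frep. destruct constructive_indefinite_description. simpl. auto. Qed.
Lemma frep_cls t : equivN (frep (fcls t)) t.
Proof. apply fcls_eq. apply fcls_rep. Qed.

Definition fj x y := fcls (tJoin (frep x) (frep y)).
Definition fm x y := fcls (tMeet (frep x) (frep y)).
Definition fd x y := fcls (tDiff (frep x) (frep y)).
Lemma fj_cls a b : fj (fcls a) (fcls b) = fcls (tJoin a b).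
Proof. apply fcls_eq. intros A HA env. simpl. rewrite (frep_cls a A HA env), (frep_cls b A HA env). reflexivity. Qed.
Lemma fm_cls a b : fm (fcls a) (fcls b) = fcls (tMeet a b).
Proof. apply fcls_eq. intros A HA env. simpl. rewrite (frep_cls a A HA env), (frep_cls b A HA env). reflexivity. Qed.
Lemma fd_cls a b : fd (fcls a) (fcls b) = fcls (tDiff a b).
Proof. apply fcls_eq. intros A HA env. simpl. rewrite (frep_cls a A HA env), (frep_cls b A HA env). reflexivity. Qed.

Ltac fdes := repeat match goal with x : fcar |- _ => destruct (fcls_surj x) as [? ->]; clear x end;
  rewrite ?fj_cls, ?fm_cls, ?fd_cls, ?fj_cls, ?fm_cls, ?fd_cls.

Definition FreeN : coHeyting.
Proof.
  refine (CoHeyting fcar (fcls tZero) (fcls tOne) fj fm fd _ _ _ _ _ _ _ _ _ _ _).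
  all: intros; fdes; rewrite ?fj_cls, ?fm_cls, ?fd_cls, ?fj_cls, ?fm_cls, ?fd_cls.
  all: try (apply fcls_eq; intros A HA env; simpl).
  - apply joinA. - apply meetA. - apply joinC. - apply meetC. - apply join_meetK.
  - apply meet_joinK. - apply meet_joinDl. - apply join0. - apply meet1. - apply diff_ge.
  - match goal with H : _ = _ |- _ => rewrite ?fj_cls, ?fm_cls, ?fd_cls, ?fj_cls in H;
      apply fcls_eq in H; specialize (H A HA env); simpl in H end.
    apply diff_min. exact H.
Defined.

Definition gF (k : nat) : FreeN := fcls (tVar k).
Lemma eval_gF t : eval gF t = fcls t.
Proof. induction t; simpl; auto; rewrite IHt1, IHt2; simpl;
  [apply fj_cls|apply fm_cls|apply fd_cls]. Qed.
Lemma gF_big k : n <= k -> gF k = fcls tZero.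
Proof. intro Hk. apply fcls_eq. intros A HA env. simpl. unfold trunc.
  destruct (lt_dec k n); [lia|reflexivity]. Qed.

Lemma FreeN_inV : in_V E FreeN.
Proof. intros s t Hst env.
  assert (Hev: forall u, eval env u = fcls (subst (fun k => frep (env k)) u)).
  { induction u; simpl; auto.
    - symmetry; apply fcls_rep.
    - rewrite IHu1, IHu2. apply fj_cls.
    - rewrite IHu1, IHu2. apply fm_cls.
    - rewrite IHu1, IHu2. apply fd_cls. }
  rewrite !Hev. apply fcls_eq. intros A HA env'. rewrite !eval_subst.
  apply HA, Hst. Qed.

Definition fh (B : coHeyting) (b : nat -> B) (x : FreeN) : B := eval (trunc B b) (frep x).
Lemma fh_cls B (HB : in_V E B) b t : fh B b (fcls t) = eval (trunc B b) t.
Proof. unfold fh. apply (frep_cls t B HB). Qed.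
Lemma fh_hom B (HB : in_V E B) b : hom FreeN B (fh B b).
Proof. split; [|split; [|split; [|split]]]; simpl; intros;
  try (fdes; rewrite ?fh_cls by auto; reflexivity);
  fdes; rewrite !fh_cls by auto; reflexivity. Qed.
Lemma fh_unique B (HB : in_V E B) b h' : hom FreeN B h' ->
  (forall k, k < n -> h' (gF k) = b k) -> forall x, h' x = fh B b x.
Proof. intros Hh Hg x. destruct (fcls_surj x) as [t ->]. rewrite fh_cls by auto.
  rewrite <- eval_gF, (hom_eval _ _ _ _ _ Hh). apply eval_ext with (n := maxv t); [apply vars_maxv|].
  intros k _. unfold trunc. destruct (lt_dec k n); auto.
  rewrite gF_big by lia. destruct Hh as [H0 _]. exact H0. Qed.

Lemma FreeN_fp : is_fp E FreeN.
Proof. split; [apply FreeN_inV|]. exists n, [], gF.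
  split; [simpl; tauto|]. split; [simpl; tauto|].
  intros B HB b _. exists (fh B b). split; [apply fh_hom; auto|]. split.
  - intros k Hk. unfold gF. rewrite fh_cls by auto. simpl. unfold trunc.
    destruct (lt_dec k n); [reflexivity|lia].
  - intros. apply fh_unique; auto. Qed.

Lemma FreeN_free : is_free E FreeN.
Proof. split; [apply FreeN_inV|]. exists {k | k < n}, (fun x => gF (proj1_sig x)).
  intros B HB f.
  set (b := fun k => match lt_dec k n with left H => f (exist _ k H) | right _ => zero B end).
  assert (Hb: forall x, b (proj1_sig x) = f x).
  { intros [k Hk]. unfold b. simpl. destruct (lt_dec k n); [|lia].
    f_equal. apply sig_eq. reflexivity. }
  exists (fh B b). split; [apply fh_hom; auto|]. split.
  - intro x. unfold gF. rewrite fh_cls by auto. simpl. unfold trunc.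
    destruct (lt_dec (proj1_sig x) n) as [|Hn]; [apply Hb|destruct x; simpl in Hn; lia].
  - intros h' Hh' Hx. apply fh_unique; auto. intros k Hk.
    replace (b k) with (f (exist _ k Hk)) by (symmetry; apply (Hb (exist _ k Hk))).
    apply (Hx (exist _ k Hk)). Qed.

Lemma FreeN_gen : forall x : FreeN, exists t, vars_lt n t /\ x = eval gF t.
Proof. intro x. destruct (fcls_surj x) as [t ->].
  exists (subst (fun k => if lt_dec k n then tVar k else tZero) t). split.
  - clear. induction t; simpl; auto. destruct (lt_dec n0 n); simpl; auto.
  - rewrite eval_subst, <- eval_gF. apply eval_ext with (n := maxv t); [apply vars_maxv|].
    intros k _. destruct (lt_dec k n); simpl; auto. apply gF_big. lia. Qed.

Lemma FreeN_nonzero t (A : coHeyting) env : in_V E A -> vars_lt n t ->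
  eval env t <> zero A -> eval gF t <> zero FreeN.
Proof. intros HA Hv Hne H. rewrite eval_gF in H. simpl in H. apply fcls_eq in H.
  specialize (H A HA env). simpl in H. apply Hne. rewrite <- H.
  apply eval_ext with (n := n); auto. intros k Hk. unfold trunc. destruct (lt_dec k n); auto; lia. Qed.
End Free.

Definition bool_of (P : Prop) : bool := if excluded_middle_informative P then true else false.
Lemma bool_of_true P : bool_of P = true <-> P.
Proof. unfold bool_of; destruct excluded_middle_informative; split; intros; congruence || tauto. Qed.
Lemma bool_of_eq P Q : bool_of P = bool_of Q -> (P <-> Q).
Proof. unfold bool_of; destruct excluded_middle_informative, excluded_middle_informative;
  intros; try discriminate; tauto. Qed.

Definition cnt {T} (P : T -> Prop) (l : list T) := length (filter (fun y => bool_of (P y)) l).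
Lemma bool_of_false P : bool_of P = false <-> ~ P.
Proof. unfold bool_of; destruct excluded_middle_informative; split; intros; congruence || tauto. Qed.
Lemma cnt_le {T} (P Q : T -> Prop) l : (forall y, P y -> Q y) -> cnt P l <= cnt Q l.
Proof. intro H. unfold cnt. induction l; simpl; auto.
  destruct (bool_of (P a)) eqn:E1, (bool_of (Q a)) eqn:E2; simpl; try lia.
  rewrite bool_of_true in E1. rewrite bool_of_false in E2. exfalso; apply E2, H, E1. Qed.
Lemma cnt_lt {T} (P Q : T -> Prop) l z : (forall y, P y -> Q y) -> In z l -> Q z -> ~ P z ->
  cnt P l < cnt Q l.
Proof. intros H Hz HQ HP. induction l; simpl; [destruct Hz|].
  destruct Hz as [->|Hz].
  - pose proof (cnt_le P Q l H) as Hc. unfold cnt in *. simpl.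
    destruct (bool_of (P z)) eqn:E1, (bool_of (Q z)) eqn:E2; simpl;
    try (rewrite bool_of_true in E1; tauto); try (rewrite bool_of_false in E2; tauto); lia.
  - specialize (IHl Hz). unfold cnt in *. simpl.
    destruct (bool_of (P a)) eqn:E1, (bool_of (Q a)) eqn:E2; simpl; try lia.
    rewrite bool_of_true in E1. rewrite bool_of_false in E2. exfalso; apply E2, H, E1. Qed.
Lemma cnt_bound {T} (P : T -> Prop) l : cnt P l <= length l.
Proof. unfold cnt. apply filter_length_le. Qed.

Lemma prime_up (L : coHeyting) p a b : prime_filter L p -> p a -> le L a b -> p b.
Proof. intros (_&H&_) ? ?. eauto. Qed.
Lemma prime_meet (L : coHeyting) p a b : prime_filter L p -> p a -> p b -> p (meet L a b).
Proof. intros (_&_&H&_) ? ?. eauto. Qed.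
Lemma prime_join (L : coHeyting) p a b : prime_filter L p -> p (join L a b) -> p a \/ p b.
Proof. intros (_&_&_&_&H) ?. eauto. Qed.
Lemma prime_one (L : coHeyting) p : prime_filter L p -> p (one L).
Proof. intros (H&_). auto. Qed.
Lemma prime_zero (L : coHeyting) p : prime_filter L p -> ~ p (zero L).
Proof. intros (_&_&_&H&_). auto. Qed.
Lemma prime_diff (L : coHeyting) p a b : prime_filter L p -> p a -> ~ p b -> p (diff L a b).
Proof. intros Hp Ha Hb. destruct (prime_join L p b (diff L a b) Hp); auto; [|tauto].
  eapply prime_up; eauto. apply diff_le. Qed.

Section Sep.
Variables L B : coHeyting.
Variable h : L -> B.
Hypothesis Hh : hom L B h.
Variable lB : list B.
Hypothesis HlB : forall y, In y lB.

Lemma atom_exists : forall y, y <> zero B -> exists j, j <> zero B /\ le B j y /\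
  forall z, le B z j -> z = zero B \/ z = j.
Proof.
  intro y. remember (cnt (fun z => le B z y) lB) as N eqn:HN. revert y HN.
  induction N as [N IH] using lt_wf_ind. intros y HN Hy.
  destruct (classic (exists z, le B z y /\ z <> zero B /\ z <> y)) as [[z (Hzy&Hz0&Hzy')]|Hno].
  - destruct (IH (cnt (fun w => le B w z) lB)) with (y := z) as [j (Hj0&Hjz&Hj)]; auto.
    + subst N. apply cnt_lt with (z := y); auto.
      * intros w Hw. eapply le_trans; eauto.
      * apply le_refl.
      * intro. apply Hzy'. apply le_antisym; auto.
    + exists j. split; [|split]; auto. eapply le_trans; eauto.
  - exists y. split; [|split]; auto. apply le_refl.
    intros z Hz. destruct (classic (z = zero B)); auto. destruct (classic (z = y)); auto.
    exfalso; apply Hno; eauto.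
Qed.

Lemma atom_prime j : j <> zero B -> (forall z, le B z j -> z = zero B \/ z = j) ->
  forall x y, le B j (join B x y) -> le B j x \/ le B j y.
Proof. intros Hj0 Hj x y H. apply le_meet in H. rewrite meet_joinDl in H.
  destruct (Hj (meet B j x) (le_meetl _ _ _)) as [H1|H1].
  - destruct (Hj (meet B j y) (le_meetl _ _ _)) as [H2|H2].
    + rewrite H1, H2, join0 in H. congruence.
    + right. rewrite <- H2. apply le_meetr.
  - left. rewrite <- H1. apply le_meetr. Qed.

Lemma sep_resfin a : h a <> zero B ->
  exists I : L -> Prop, ideal L I /\ ~ I a /\ quotient_finite L I.
Proof. intro Ha. destruct Hh as (H0&H1&Hj&Hm&Hd).
  exists (fun x => h x = zero B). split; [|split; auto].
  - split; [auto|split].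
    + intros x y Hy Hxy. apply le0_eq. rewrite <- Hy. apply (hom_le _ _ _ _ _ Hh Hxy).
    + intros x y Hx Hy. rewrite Hj, Hx, Hy. apply join0.
  - set (pre := fun y : B => match excluded_middle_informative (exists x, h x = y) with
                | left H => proj1_sig (constructive_indefinite_description _ H)
                | right _ => zero L end).
    exists (map pre lB). intro x. exists (pre (h x)). split; [apply in_map; auto|].
    unfold pre. destruct excluded_middle_informative as [He|He]; [|exfalso; eauto].
    destruct constructive_indefinite_description as [x' Hx']. simpl.
    unfold equiv_mod. rewrite Hj, !Hd, Hx', diff_self. apply join0.
Qed.

Lemma sep_codim a : h a <> zero B -> codim_finite L a.
Proof. intro Ha. destruct (atom_exists (h a) Ha) as [j (Hj0&Hja&Hj)].
  pose proof Hh as (H0&H1&Hjn&Hm&Hd).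
  set (p := fun x => le B j (h x)).
  assert (Hp: prime_filter L p).
  { unfold p; split; [|split; [|split; [|split]]].
    - rewrite H1. apply le1.
    - intros x y Hx Hxy. eapply le_trans; eauto. apply hom_le; auto.
    - intros x y Hx Hy. rewrite Hm. apply meet_glb; auto.
    - rewrite H0. intro. apply Hj0, le0_eq; auto.
    - intros x y Hxy. rewrite Hjn in Hxy. apply atom_prime; auto. }
  set (img := fun (q : L -> Prop) (y : B) => exists x, q x /\ h x = y).
  assert (Hst: forall q q', prime_filter L q -> prime_filter L q' -> (forall x, q x -> p x) ->
     strict_sub L q' q -> cnt (img q') lB < cnt (img q) lB).
  { intros q q' Hq Hq' Hqp [Hsub [x [Hx Hnx]]]. apply cnt_lt with (z := h x); auto.
    - intros y [w [Hw <-]]. exists w; auto.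
    - exists x; auto.
    - intros [y [Hy Hyx]]. destruct (prime_join L q' x (diff L y x) Hq') as [|Hd'].
      + eapply prime_up; eauto. apply diff_le.
      + auto.
      + apply Hj0. apply le0_eq. specialize (Hqp _ (Hsub _ Hd')). unfold p in Hqp.
        rewrite Hd, Hyx, diff_self in Hqp. exact Hqp. }
  assert (Hht: forall N q, prime_filter L q -> (forall x, q x -> p x) ->
     cnt (img q) lB <= N -> ht_le L N q).
  { induction N; intros q Hq Hqp Hc; simpl.
    - intros q' Hq' Hs. pose proof (Hst q q' Hq Hq' Hqp Hs). lia.
    - intros q' Hq' Hs. pose proof (Hst q q' Hq Hq' Hqp Hs). apply IHN; auto; [|lia].
      intros x Hx. apply Hqp. apply Hs. auto. }
  exists p, (cnt (img p) lB). split; [auto|split]; [exact Hja|]. apply Hht; auto. Qed.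
End Sep.

Lemma dL_ideal (L : coHeyting) d : ideal L (dL L d).
Proof. unfold dL, codim_ge. split; [|split].
 - intros p Hp H0. exfalso. eapply prime_zero; eauto.
 - intros a b Hb Hab p Hp Ha. apply Hb; auto. eapply prime_up; eauto.
 - intros a b Ha Hb p Hp Hab. destruct (prime_join L p a b Hp Hab); auto. Qed.

Lemma quot_witness E (L : coHeyting) I env t : in_V E L -> ideal L I -> quotient_finite L I ->
  ~ I (eval env t) ->
  exists A : coHeyting, in_V E A /\ finite_alg A /\ exists env', eval env' t <> zero A.
Proof. intros HV HI Hf Ht. exists (Quot L I HI). split; [apply Quot_inV; auto|].
  split; [apply Quot_finite; auto|]. exists (fun k => cls L I (env k)).
  rewrite <- (hom_eval _ _ _ _ _ (cls_hom L I HI)). simpl. rewrite cls_zero; auto. Qed.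

Lemma ht_le_mono (L : coHeyting) m : forall k p, ht_le L m p -> m <= k -> ht_le L k p.
Proof. induction m; intros k p H Hk.
 - destruct k; auto. simpl in *. intros q Hq Hs. exfalso; eauto.
 - destruct k; [lia|]. simpl in *. intros q Hq Hs. apply IHm; auto; lia. Qed.

Lemma ht_le_down (L : coHeyting) k p q : prime_filter L q -> (forall x, q x -> p x) ->
  ht_le L k p -> ht_le L k q.
Proof. intros Hq Hqp Hp. destruct (classic (exists x, p x /\ ~ q x)) as [Hs|Hns].
 - destruct k; simpl in Hp.
   + exfalso. eapply Hp; eauto. split; auto.
   + apply ht_le_mono with k; [|lia]. apply Hp; auto. split; auto.
 - replace q with p; auto. extensionality x. apply propositional_extensionality.
   split; auto. intro. apply NNPP. intro. apply Hns; eauto. Qed.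

Section PFT.
Variable L : coHeyting.
Variable e : nat -> L.
Hypothesis He : forall x, exists m, e m = x.
Variable J : L -> Prop.
Hypothesis J0 : J (zero L).
Hypothesis Jd : forall x y, J y -> le L x y -> J x.
Hypothesis Jj : forall x y, J x -> J y -> J (join L x y).
Variable a : L.
Hypothesis Ha : ~ J a.

Fixpoint cseq (k : nat) : L :=
  match k with
  | 0 => a
  | S k' => if excluded_middle_informative (J (meet L (cseq k') (e k'))) then cseq k'
            else meet L (cseq k') (e k')
  end.
Lemma cseq_nJ k : ~ J (cseq k).
Proof. induction k; simpl; auto. destruct excluded_middle_informative; auto. Qed.
Lemma cseq_step k : le L (cseq (S k)) (cseq k).
Proof. simpl. destruct excluded_middle_informative; [apply le_refl|apply le_meetl]. Qed.
Lemma cseq_anti k m : k <= m -> le L (cseq m) (cseq k).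
Proof. induction 1; [apply le_refl|]. eapply le_trans; [apply cseq_step|]; auto. Qed.

Definition qP (x : L) : Prop := exists k, le L (cseq k) x.

Lemma qP_prime : prime_filter L qP.
Proof. unfold qP. split; [|split; [|split; [|split]]].
 - exists 0. apply le1.
 - intros x y [k Hk] Hxy. exists k. eapply le_trans; eauto.
 - intros x y [k Hk] [m Hm]. exists (Nat.max k m). apply meet_glb.
   + apply le_trans with (cseq k); [apply cseq_anti; lia|exact Hk].
   + apply le_trans with (cseq m); [apply cseq_anti; lia|exact Hm].
 - intros [k Hk]. apply (cseq_nJ k). eapply Jd; eauto.
 - intros x y [k Hk]. apply NNPP. intro Hn.
   destruct (He x) as [i <-]. destruct (He y) as [j <-].
   assert (Hi: J (meet L (cseq i) (e i))).
   { apply NNPP. intro Hi. apply Hn. left. exists (S i). simpl.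
     destruct excluded_middle_informative; [tauto|apply le_meetr]. }
   assert (Hj: J (meet L (cseq j) (e j))).
   { apply NNPP. intro Hj. apply Hn. right. exists (S j). simpl.
     destruct excluded_middle_informative; [tauto|apply le_meetr]. }
   set (m := Nat.max k (Nat.max i j)).
   apply (cseq_nJ m). apply Jd with (join L (meet L (cseq i) (e i)) (meet L (cseq j) (e j))); auto.
   assert (Hm: cseq m = meet L (cseq m) (join L (e i) (e j))).
   { symmetry. apply le_meet. apply le_trans with (cseq k); [apply cseq_anti; lia|exact Hk]. }
   rewrite Hm, meet_joinDl. apply join_mono; apply meet_mono; try apply le_refl;
   apply cseq_anti; lia.
Qed.
Lemma qP_a : qP a. Proof. exists 0. apply le_refl. Qed.
Lemma qP_disj x : qP x -> ~ J x.
Proof. intros [k Hk] Hx. apply (cseq_nJ k). eapply Jd; eauto. Qed.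
End PFT.

From Stdlib Require Import Cantor.
Fixpoint decf (f : nat) (k : nat) : term :=
  match f with
  | 0 => tZero
  | S f' =>
    let (tag, r) := Cantor.of_nat k in
    match tag with
    | 0 => tVar r
    | 1 => tZero
    | 2 => tOne
    | 3 => let (x, y) := Cantor.of_nat r in tJoin (decf f' x) (decf f' y)
    | 4 => let (x, y) := Cantor.of_nat r in tMeet (decf f' x) (decf f' y)
    | _ => let (x, y) := Cantor.of_nat r in tDiff (decf f' x) (decf f' y)
    end
  end.
Fixpoint depth (t : term) : nat :=
  match t with
  | tVar _ | tZero | tOne => 0
  | tJoin a b | tMeet a b | tDiff a b => S (Nat.max (depth a) (depth b))
  end.
Lemma decf_surj t : exists k, forall f, depth t < f -> decf f k = t.
Proof. induction t.
 - exists (Cantor.to_nat (0, n)). intros [|f] Hf; [lia|]. cbn [decf]. rewrite Cantor.cancel_of_to. reflexivity.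
 - exists (Cantor.to_nat (1, 0)). intros [|f] Hf; [lia|]. cbn [decf]. rewrite Cantor.cancel_of_to. reflexivity.
 - exists (Cantor.to_nat (2, 0)). intros [|f] Hf; [lia|]. cbn [decf]. rewrite Cantor.cancel_of_to. reflexivity.
 - destruct IHt1 as [k1 H1], IHt2 as [k2 H2]. exists (Cantor.to_nat (3, Cantor.to_nat (k1, k2))).
   intros [|f] Hf; [lia|]. simpl depth in Hf. cbn [decf]. rewrite Cantor.cancel_of_to. cbv beta iota.
   rewrite Cantor.cancel_of_to. rewrite H1, H2 by lia. reflexivity.
 - destruct IHt1 as [k1 H1], IHt2 as [k2 H2]. exists (Cantor.to_nat (4, Cantor.to_nat (k1, k2))).
   intros [|f] Hf; [lia|]. simpl depth in Hf. cbn [decf]. rewrite Cantor.cancel_of_to. cbv beta iota.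
   rewrite Cantor.cancel_of_to. rewrite H1, H2 by lia. reflexivity.
 - destruct IHt1 as [k1 H1], IHt2 as [k2 H2]. exists (Cantor.to_nat (5, Cantor.to_nat (k1, k2))).
   intros [|f] Hf; [lia|]. simpl depth in Hf. cbn [decf]. rewrite Cantor.cancel_of_to. cbv beta iota.
   rewrite Cantor.cancel_of_to. rewrite H1, H2 by lia. reflexivity.
Qed.
Definition dec (m : nat) : term := let (f, k) := Cantor.of_nat m in decf f k.
Lemma dec_surj t : exists m, dec m = t.
Proof. destruct (decf_surj t) as [k Hk]. exists (Cantor.to_nat (S (depth t), k)).
  unfold dec. rewrite Cantor.cancel_of_to. apply Hk. lia. Qed.

Fixpoint blists (m : nat) : list (list bool) :=
  match m with
  | 0 => [[]]
  | S m' => map (cons true) (blists m') ++ map (cons false) (blists m')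
  end.
Lemma blists_in l : In l (blists (length l)).
Proof. induction l; simpl; auto. apply in_or_app. destruct a; [left|right]; apply in_map; auto. Qed.

Lemma map_eq_in {A B} (f g : A -> B) l x : map f l = map g l -> In x l -> f x = g x.
Proof. induction l; simpl; [tauto|]. intros H [->|Hx]; injection H; auto. Qed.
Lemma app_eq_len {A} (l1 l2 l1' l2' : list A) : length l1 = length l1' ->
  l1 ++ l2 = l1' ++ l2' -> l1 = l1' /\ l2 = l2'.
Proof. revert l1'; induction l1; intros [|b l1'] Hl H; simpl in *; try discriminate; auto.
  injection H; intros H' ->. destruct (IHl1 l1') as [-> ->]; auto. Qed.

Section Deep.
Variable L : coHeyting.
Variable n : nat.
Variable g : nat -> L.
Hypothesis Gen : forall a : L, exists t, vars_lt n t /\ a = eval g t.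

Definition enumL (m : nat) : L := eval g (dec m).
Lemma enumL_surj x : exists m, enumL m = x.
Proof. destruct (Gen x) as [t [_ ->]]. destruct (dec_surj t) as [m Hm]. exists m.
  unfold enumL. rewrite Hm. auto. Qed.

Lemma diff_witness p a b : prime_filter L p -> p (diff L a b) ->
  exists q, prime_filter L q /\ (forall x, q x -> p x) /\ q a /\ ~ q b.
Proof. intros Hp Hab.
  set (J := fun x => exists c, ~ p c /\ le L x (join L b c)).
  assert (J0: J (zero L)) by (exists (zero L); split; [apply prime_zero; auto|apply le0]).
  assert (Jd: forall x y, J y -> le L x y -> J x).
  { intros x y [c [Hc Hy]] Hxy. exists c. split; auto. eapply le_trans; eauto. }
  assert (Jj: forall x y, J x -> J y -> J (join L x y)).
  { intros x y [c [Hc Hx]] [c' [Hc' Hy]]. exists (join L c c'). split.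
    - intro H. destruct (prime_join L p c c' Hp H); auto.
    - apply join_lub; [eapply le_trans; [exact Hx|]|eapply le_trans; [exact Hy|]];
      apply join_mono; (apply le_refl || apply le_joinl || apply le_joinr). }
  assert (Ha: ~ J a).
  { intros [c [Hc Hac]]. apply Hc. eapply prime_up; eauto. apply diff_galois. auto. }
  exists (qP L enumL J a). split; [apply qP_prime; auto; apply enumL_surj|].
  split; [|split; [apply qP_a|]].
  - intros x Hx. apply NNPP. intro Hpx. apply (qP_disj L enumL J Jd a Ha x Hx).
    exists x. split; auto. apply le_joinr.
  - intro Hb. apply (qP_disj L enumL J Jd a Ha b Hb). exists (zero L). split; [apply prime_zero; auto|].
    apply le_joinl.
Qed.

Definition colour (p : L -> Prop) : list bool := map (fun k => bool_of (p (g k))) (seq 0 n).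
Fixpoint lenc (k : nat) : nat :=
  match k with 0 => n | S k' => n + length (blists (lenc k')) end.
Fixpoint code (k : nat) (p : L -> Prop) : list bool :=
  match k with
  | 0 => colour p
  | S k' => colour p ++ map (fun c => bool_of (exists q, prime_filter L q /\ strict_sub L q p /\
                                   ht_le L k' q /\ code k' q = c)) (blists (lenc k'))
  end.
Lemma code_len k p : length (code k p) = lenc k.
Proof. destruct k; simpl; unfold colour; rewrite ?length_app, !length_map, length_seq; auto. Qed.
Lemma code_colour k p p' : code k p = code k p' -> colour p = colour p'.
Proof. destruct k; simpl; auto. intro H. apply app_eq_len in H; [tauto|].
  unfold colour; rewrite !length_map; auto. Qed.
Lemma code_gen k p p' i : code k p = code k p' -> i < n -> (p (g i) <-> p' (g i)).
Proof. intros H Hi. apply code_colour in H. unfold colour in H.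
  apply bool_of_eq. apply (map_eq_in _ _ _ i H). apply in_seq. lia. Qed.
Lemma code_below k p p' q : code (S k) p = code (S k) p' -> prime_filter L q ->
  strict_sub L q p -> ht_le L k q ->
  exists q', prime_filter L q' /\ strict_sub L q' p' /\ ht_le L k q' /\ code k q' = code k q.
Proof. intros H Hq Hs Hh. simpl in H. apply app_eq_len in H; [|unfold colour; rewrite !length_map; auto].
  destruct H as [_ H]. eapply map_eq_in in H; [|rewrite <- (code_len k q); apply blists_in].
  apply bool_of_eq in H. apply H. exists q. auto. Qed.

Lemma transfer t : vars_lt n t -> forall k p p', prime_filter L p -> prime_filter L p' ->
  ht_le L k p -> ht_le L k p' -> code k p = code k p' -> p (eval g t) -> p' (eval g t).
Proof.
  induction t; simpl; intros Hv k p p' Hp Hp' Hk Hk' Hc H.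
  - apply (code_gen k p p'); auto.
  - exfalso. exact (prime_zero L p Hp H).
  - apply prime_one; auto.
  - destruct Hv as [Hv1 Hv2]. destruct (prime_join L p _ _ Hp H) as [H1|H1].
    + apply prime_up with (a := eval g t1); [exact Hp'|exact (IHt1 Hv1 k p p' Hp Hp' Hk Hk' Hc H1)|apply le_joinl].
    + apply prime_up with (a := eval g t2); [exact Hp'|exact (IHt2 Hv2 k p p' Hp Hp' Hk Hk' Hc H1)|apply le_joinr].
  - destruct Hv as [Hv1 Hv2]. apply prime_meet; auto.
    + apply (IHt1 Hv1 k p p' Hp Hp' Hk Hk' Hc). apply prime_up with (1 := Hp) (2 := H). apply le_meetl.
    + apply (IHt2 Hv2 k p p' Hp Hp' Hk Hk' Hc). apply prime_up with (1 := Hp) (2 := H). apply le_meetr.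
  - destruct Hv as [Hv1 Hv2].
    destruct (diff_witness p _ _ Hp H) as [q (Hq&Hqp&Hq1&Hq2)].
    destruct (classic (exists x, p x /\ ~ q x)) as [Hs|Hns].
    + destruct k as [|k]; [exfalso; simpl in Hk; eapply Hk; eauto; split; auto|].
      assert (Hkq: ht_le L k q) by (simpl in Hk; apply Hk; auto; split; auto).
      destruct (code_below k p p' q Hc Hq (conj Hqp Hs) Hkq) as [q' (Hq'&Hs'&Hk''&Hc')].
      assert (q' (eval g t1)) by exact (IHt1 Hv1 k q q' Hq Hq' Hkq Hk'' (eq_sym Hc') Hq1).
      assert (~ q' (eval g t2)) by (intro H2; apply Hq2; exact (IHt2 Hv2 k q' q Hq' Hq Hk'' Hkq Hc' H2)).
      apply (proj1 Hs'). apply prime_diff; auto.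
    + assert (Hpq: forall x, p x -> q x) by (intros x Hx; apply NNPP; intro; apply Hns; eauto).
      apply prime_diff; auto.
      * exact (IHt1 Hv1 k p p' Hp Hp' Hk Hk' Hc (Hqp _ Hq1)).
      * intro H2. apply Hq2, Hpq. exact (IHt2 Hv2 k p' p Hp' Hp Hk' Hk (eq_sym Hc) H2).
Qed.
End Deep.

Section Precompact.
Variable L : coHeyting.
Variable n : nat.
Variable g : nat -> L.
Hypothesis Gen : forall a : L, exists t, vars_lt n t /\ a = eval g t.
Variable D : nat.
Definition sigv (a : L) : list bool :=
  map (fun c => bool_of (exists p, prime_filter L p /\ ht_le L D p /\ code L n g D p = c /\ p a))
      (blists (lenc n D)).
Lemma sigv_sep a b p : sigv a = sigv b -> prime_filter L p -> ht_le L D p -> ~ p (diff L a b).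
Proof. intros Hs Hp Hh Hd.
  destruct (diff_witness L n g Gen p a b Hp Hd) as [q (Hq&Hqp&Hqa&Hqb)].
  assert (HqD: ht_le L D q) by (eapply ht_le_down; eauto).
  unfold sigv in Hs. eapply map_eq_in in Hs;
    [|rewrite <- (code_len L n g D q); apply blists_in].
  apply bool_of_eq in Hs. destruct (proj1 Hs) as [p' (Hp'&Hh'&Hc'&Hb)].
  { exists q. auto. }
  apply Hqb. destruct (Gen b) as [tb [Hv ->]].
  apply (transfer L n g Gen tb Hv D p' q); auto.
Qed.
End Precompact.

Theorem gen_precompact (L : coHeyting) n g :
  (forall a : L, exists t, vars_lt n t /\ a = eval g t) -> precompact L.
Proof. intros Gen d Hd. set (D := d - 1).
  set (m := length (blists (lenc n D))).
  set (pick := fun w => match excluded_middle_informative (exists a, sigv L n g D a = w) with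
               | left H => proj1_sig (constructive_indefinite_description _ H)
               | right _ => zero L end).
  exists (map pick (blists m)). intro a. exists (pick (sigv L n g D a)). split.
  - apply in_map. replace m with (length (sigv L n g D a)); [apply blists_in|].
    unfold sigv. rewrite length_map. reflexivity.
  - unfold pick. destruct excluded_middle_informative as [He|He]; [|exfalso; eauto].
    destruct constructive_indefinite_description as [b Hb]. simpl.
    intros p Hp Hdd k Hk Hht.
    assert (HD: ht_le L D p) by (apply ht_le_mono with k; auto; lia).
    destruct (prime_join L p _ _ Hp Hdd) as [H|H].
    + eapply (sigv_sep L n g Gen D a b p); eauto.
    + eapply (sigv_sep L n g Gen D b a p); eauto.
Qed.

Lemma hom_comp A B C f h : hom A B f -> hom B C h -> hom A C (fun x => h (f x)).
Proof. intros (f0&f1&fj&fm&fd) (h0&h1&hj&hm&hd).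
  split; [|split; [|split; [|split]]]; intros; congruence. Qed.
Lemma hom_id A : hom A A (fun x => x).
Proof. split; [|split; [|split; [|split]]]; reflexivity. Qed.

Lemma fp_gen E (A : coHeyting) n R g :
  in_V E A ->
  (forall st, In st R -> vars_lt n (fst st) /\ vars_lt n (snd st)) ->
  (forall st, In st R -> eval g (fst st) = eval g (snd st)) ->
  (forall B : coHeyting, in_V E B -> forall b : nat -> B,
      (forall st, In st R -> eval b (fst st) = eval b (snd st)) ->
      exists h : A -> B, hom A B h /\ (forall k, k < n -> h (g k) = b k) /\
        forall h' : A -> B, hom A B h' -> (forall k, k < n -> h' (g k) = b k) ->
          forall a, h' a = h a) ->
  forall a : A, exists t, vars_lt n t /\ a = eval g t.
Proof. intros HV HRv HRg Univ.
  set (S := fun a : A => exists t, vars_lt n t /\ a = eval g t).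
  assert (S0: S (zero A)) by (exists tZero; simpl; auto).
  assert (S1: S (one A)) by (exists tOne; simpl; auto).
  assert (Sj: forall a b, S a -> S b -> S (join A a b))
    by (intros a b [t1 [H1 ->]] [t2 [H2 ->]]; exists (tJoin t1 t2); simpl; auto).
  assert (Sm: forall a b, S a -> S b -> S (meet A a b))
    by (intros a b [t1 [H1 ->]] [t2 [H2 ->]]; exists (tMeet t1 t2); simpl; auto).
  assert (Sd: forall a b, S a -> S b -> S (diff A a b))
    by (intros a b [t1 [H1 ->]] [t2 [H2 ->]]; exists (tDiff t1 t2); simpl; auto).
  set (SA := Sub A S S0 S1 Sj Sm Sd).
  set (b := fun k => match lt_dec k n with
            | left H => exist S (g k) (ex_intro _ (tVar k) (conj H eq_refl)) : SA
            | right _ => exist S (zero A) S0 : SA end).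
  assert (Hb: forall k, k < n -> proj1_sig (b k) = g k).
  { intros k Hk. unfold b. destruct (lt_dec k n); [reflexivity|lia]. }
  assert (Hev: forall t, vars_lt n t -> proj1_sig (eval b t) = eval g t).
  { intros t Hv. rewrite (hom_eval _ _ _ _ _ (incl_hom A S S0 S1 Sj Sm Sd)).
    apply eval_ext with n; auto. }
  destruct (Univ SA (Sub_inV _ _ _ _ _ _ _ E HV) b) as [h (Hh&Hhg&_)].
  { intros st Hst. apply sig_eq. destruct (HRv st Hst). rewrite !Hev by auto. auto. }
  destruct (Univ A HV g HRg) as [h0 (_&_&Hu)].
  assert (E1: forall a, proj1_sig (h a) = h0 a).
  { apply (Hu (fun a => proj1_sig (h a))).
    - apply hom_comp with (B := SA); auto. apply incl_hom.
    - intros k Hk. rewrite Hhg by auto. apply Hb; auto. }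
  assert (E2: forall a, a = h0 a) by (apply (Hu (fun a => a)); auto using hom_id).
  intro a. rewrite (E2 a), <- E1. exact (proj2_sig (h a)).
Qed.

Lemma even_div2 m : Nat.even (2*m) = true /\ Nat.div2 (2*m) = m /\
  Nat.even (S (2*m)) = false /\ Nat.div2 (S (2*m)) = m.
Proof. induction m; [simpl; auto|].
  replace (2 * S m) with (S (S (2*m))) by lia. simpl. destruct IHm as (?&?&?&?). auto. Qed.

Section FreeX.
Variable F : coHeyting.
Variable X : Type.
Variable i : X -> F.
Definition envr (r : nat -> option X) (k : nat) : F :=
  match r k with Some x => i x | None => zero F end.

Lemma free_gen E : in_V E F ->
  (forall B : coHeyting, in_V E B -> forall f : X -> B,
      exists h : F -> B, hom F B h /\ (forall x, h (i x) = f x) /\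
        forall h' : F -> B, hom F B h' -> (forall x, h' (i x) = f x) ->
          forall a, h' a = h a) ->
  forall a : F, exists t r, a = eval (envr r) t.
Proof. intros HV Univ.
  set (S := fun a : F => exists t r, a = eval (envr r) t).
  assert (S0: S (zero F)) by (exists tZero, (fun _ => None); reflexivity).
  assert (S1: S (one F)) by (exists tOne, (fun _ => None); reflexivity).
  assert (Sbin: forall (op : term -> term -> term) (opF : F -> F -> F),
     (forall env u v, eval env (op u v) = opF (eval env u) (eval env v)) ->
     forall a b, S a -> S b -> S (opF a b)).
  { intros op opF Hop a b [t1 [r1 ->]] [t2 [r2 ->]].
    exists (op (subst (fun m => tVar (2*m)) t1) (subst (fun m => tVar (Datatypes.S (2*m))) t2)),
      (fun k => if Nat.even k then r1 (Nat.div2 k) else r2 (Nat.div2 k)).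
    rewrite Hop, !eval_subst. f_equal; f_equal; extensionality m; cbn [eval]; unfold envr;
    destruct (even_div2 m) as (E1&E2&E3&E4); rewrite ?E1, ?E2, ?E3, ?E4; reflexivity. }
  assert (Sj: forall a b, S a -> S b -> S (join F a b)) by (apply (Sbin tJoin); reflexivity).
  assert (Sm: forall a b, S a -> S b -> S (meet F a b)) by (apply (Sbin tMeet); reflexivity).
  assert (Sd: forall a b, S a -> S b -> S (diff F a b)) by (apply (Sbin tDiff); reflexivity).
  set (SF := Sub F S S0 S1 Sj Sm Sd).
  set (f := fun x => exist S (i x) (ex_intro _ (tVar 0) (ex_intro _ (fun _ => Some x) eq_refl)) : SF).
  destruct (Univ SF (Sub_inV _ _ _ _ _ _ _ E HV) f) as [h (Hh&Hhi&_)].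
  destruct (Univ F HV i) as [h0 (_&_&Hu)].
  assert (E1: forall a, proj1_sig (h a) = h0 a).
  { apply (Hu (fun a => proj1_sig (h a))).
    - apply hom_comp with (B := SF); auto. apply incl_hom.
    - intros x. rewrite Hhi. reflexivity. }
  assert (E2: forall a, a = h0 a) by (apply (Hu (fun a => a)); auto using hom_id).
  intro a. rewrite (E2 a), <- E1. exact (proj2_sig (h a)).
Qed.
End FreeX.

Lemma free_sep E F : fmp E -> is_free E F -> forall a : F, a <> zero F ->
  exists (B : coHeyting) (h : F -> B), hom F B h /\ finite_alg B /\ h a <> zero B.
Proof. intros Hfmp [HV [X [i Univ]]] a Ha.
  destruct (free_gen F X i E HV Univ a) as [t [r ->]].
  set (pick := fun x => match excluded_middle_informative (exists m, r m = Some x) with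
               | left H => proj1_sig (constructive_indefinite_description _ H)
               | right _ => 0 end).
  assert (Hpick: forall k x, r k = Some x -> r (pick x) = Some x).
  { intros k x Hk. unfold pick. destruct excluded_middle_informative as [He|He]; [|exfalso; eauto].
    destruct constructive_indefinite_description. simpl. auto. }
  set (sg := fun k => match r k with None => tZero | Some x => tVar (pick x) end).
  assert (Ht: eval (envr F X i r) (subst sg t) = eval (envr F X i r) t).
  { rewrite eval_subst. f_equal. extensionality k. unfold sg. destruct (r k) eqn:Ek; simpl.
    - unfold envr at 1. rewrite (Hpick k x Ek). unfold envr. rewrite Ek. reflexivity.
    - unfold envr. rewrite Ek. reflexivity. }
  destruct (Hfmp (subst sg t)) as [B [HB [HfB [env' Hne]]]].
  { exists F. split; auto. exists (envr F X i r). rewrite Ht. auto. }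
  destruct (Univ B HB (fun x => env' (pick x))) as [h (Hh&Hhi&_)].
  exists B, h. split; [auto|split; auto]. rewrite <- Ht.
  rewrite (hom_eval _ _ _ _ _ Hh), eval_subst. rewrite eval_subst in Hne.
  replace (fun k => eval (fun k0 => h (envr F X i r k0)) (sg k)) with (fun k => eval env' (sg k)); auto.
  extensionality k. unfold sg. destruct (r k) eqn:Ek; simpl.
  - unfold envr. rewrite (Hpick k x Ek). rewrite Hhi. reflexivity.
  - destruct Hh as [H0 _]. auto.
Qed.

Definition rterm (R : list (term * term)) : term :=
  fold_right (fun st acc => tJoin (tJoin (tDiff (fst st) (snd st)) (tDiff (snd st) (fst st))) acc) tZero R.
Lemma rterm_zero (A : coHeyting) (env : nat -> A) R :
  (forall st, In st R -> eval env (fst st) = eval env (snd st)) -> eval env (rterm R) = zero A.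
Proof. induction R as [|st R IH]; simpl; auto. intro H. rewrite IH by auto.
  rewrite (H st) by auto. rewrite diff_self, !join0. reflexivity. Qed.
Lemma rterm_le (A : coHeyting) (env : nat -> A) R st : In st R ->
  le A (dd A (eval env (fst st)) (eval env (snd st))) (eval env (rterm R)).
Proof. induction R as [|st' R IH]; simpl; [tauto|]. intros [->|H].
  - apply le_jl. apply le_refl.
  - apply le_jr. auto. Qed.

Lemma fp_hausdorff E A : fmp E -> is_fp E A -> hausdorff A.
Proof. intros Hfmp [HV [n [R [g (HRv&HRg&Univ)]]]] a Ha.
  pose proof (fp_gen E A n R g HV HRv HRg Univ) as Gen.
  destruct (Gen a) as [t [Hv ->]].
  set (t' := tDiff t (rterm R)).
  destruct (Hfmp t') as [B [HB [[lB HlB] [env' Hne]]]].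
  { exists A. split; auto. exists g. unfold t'. simpl. rewrite rterm_zero by auto.
    rewrite diff_0r. auto. }
  unfold t' in Hne. simpl in Hne. set (r' := eval env' (rterm R)) in *.
  set (I := fun x => le B x r').
  assert (HI: ideal B I).
  { split; [apply le0|split].
    - intros x y Hy Hxy. eapply le_trans; eauto.
    - intros x y Hx Hy. apply join_lub; auto. }
  set (Q := Quot B I HI).
  destruct (Univ Q (Quot_inV B I HI E HB) (fun k => cls B I (env' k))) as [h (Hh&Hhg&_)].
  { intros st Hst. rewrite <- !(hom_eval _ _ _ _ _ (cls_hom B I HI)). simpl.
    apply (cls_eq B I HI). apply rterm_le. auto. }
  apply (sep_codim A Q h Hh (map (cls B I) lB)).
  - intro y. destruct (cls_surj B I y) as [b ->]. apply in_map. auto.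
  - rewrite (hom_eval _ _ _ _ _ Hh).
    rewrite (eval_ext Q n t _ (fun k => cls B I (env' k))) by auto.
    rewrite <- (hom_eval _ _ _ _ _ (cls_hom B I HI)). simpl. rewrite cls_zero by auto.
    intro Hle. apply Hne. apply diff_zero_iff. exact Hle.
Qed.

Lemma fmp_from_codim E (L : coHeyting) env t : in_V E L -> precompact L ->
  codim_finite L (eval env t) ->
  exists A : coHeyting, in_V E A /\ finite_alg A /\ exists env', eval env' t <> zero A.
Proof. intros HV Hpc [p [m (Hp&Hpa&Hm)]].
  apply quot_witness with (L := L) (I := dL L (S m)) (env := env); auto.
  - apply dL_ideal.
  - apply Hpc. lia.
  - intro H. apply (H p Hp Hpa m); auto. Qed.

Theorem proposition5p4 (E : equations) :
  (fmp E <-> (forall F : coHeyting, is_free E F -> residually_finite F)) /\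
  (fmp E <-> (forall F : coHeyting, is_free E F -> hausdorff F)) /\
  (fmp E <-> (forall A : coHeyting, is_fp E A -> precompact A /\ hausdorff A)).
Proof.
  split; [|split]; split.
  - intros Hfmp F HF a Ha. destruct (free_sep E F Hfmp HF a Ha) as [B [h (Hh&[lB HlB]&Hne)]].
    apply (sep_resfin F B h Hh lB HlB a Hne).
  - intros H t [A [HA [env Hne]]].
    set (n := maxv t). pose proof (FreeN_nonzero E n t A env HA (vars_maxv t) Hne) as Hnz.
    destruct (H _ (FreeN_free E n) _ Hnz) as [I (HI&HIa&Hq)].
    apply (quot_witness E (FreeN E n) I (gF E n) t); auto. apply FreeN_inV.
  - intros Hfmp F HF a Ha. destruct (free_sep E F Hfmp HF a Ha) as [B [h (Hh&[lB HlB]&Hne)]].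
    apply (sep_codim F B h Hh lB HlB a Hne).
  - intros H t [A [HA [env Hne]]].
    set (n := maxv t). pose proof (FreeN_nonzero E n t A env HA (vars_maxv t) Hne) as Hnz.
    apply fmp_from_codim with (L := FreeN E n) (env := gF E n).
    + apply FreeN_inV.
    + apply (gen_precompact _ n (gF E n)). apply FreeN_gen.
    + apply (H _ (FreeN_free E n)). auto.
  - intros Hfmp A HA. split.
    + destruct HA as [HV [n [R [g (HRv&HRg&Univ)]]]].
      apply (gen_precompact A n g). apply (fp_gen E A n R g); auto.
    + apply (fp_hausdorff E); auto.
  - intros H t [A [HA [env Hne]]].
    set (n := maxv t). pose proof (FreeN_nonzero E n t A env HA (vars_maxv t) Hne) as Hnz.
    destruct (H _ (FreeN_fp E n)) as [Hpc Hh].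
    apply fmp_from_codim with (L := FreeN E n) (env := gF E n); auto.
    apply FreeN_inV.
Qed.
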